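(* Let $p<q$ be coprime positive integers and $m$ a positive integer; put $k=\gcd(m,q-p)$ and $a=m/k$. Let $A=\mathbb C[X_0,\dots,X_4]$, graded by $\mathbb Z\times\mathbb Z/m\mathbb Z$ with $X_0$ of degree $(1,0)$, $X_1,X_2$ of degree $(-p,-1)$, $X_3,X_4$ of degree $(q,1)$, and for $s\in\mathbb C$ let $J_s=(X_0^{q-p},\;X_2,\;X_4,\;s-X_1^{aq}X_3^{ap})$. Then $\dim(A/J_1)_{(n,d)}\ge 1$ and $\dim(A/J_0)_{(n,d)}\ge 1$ for all $(n,d)\in\mathbb Z\times\mathbb Z/m\mathbb Z$.
   Context: The grading is the weight grading for the action of $G_0\times G_m$ ($G_0\cong\mathbb C^*$, $G_m\cong\mu_m$) on $\mathbb C^5$ given by $t\cdot(x_0,\dots,x_4)=(tx_0,t^{-p}x_1,t^{-p}x_2,t^qx_3,t^qx_4)$ and $\zeta\cdot(x_0,\dots,x_4)=(x_0,\zeta^{-1}x_1,\zeta^{-1}x_2,\zeta x_3,\zeta x_4)$. *)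

(* Defs.v *)
From HB Require Import structures.
From mathcomp Require Import all_boot all_algebra.
From mathcomp Require Import complex.
From mathcomp Require Import Rstruct.
From mathcomp Require Import mpoly.
Set Implicit Arguments. Unset Strict Implicit. Unset Printing Implicit Defensive.
Import GRing.Theory.
Local Open Scope ring_scope.

Definition CC : fieldType := complex Rdefinitions.R.

Definition A := {mpoly CC[5]}.

Definition vx (i : nat) : 'I_5 := inord i.

(* The Z x Z/mZ grading: X_0 has degree (1,0), X_1, X_2 have degree (-p,-1),
   X_3, X_4 have degree (q,1).  The Z/mZ-component is represented by an
   integer, taken modulo m. *)
Definition wdegZ (p q : nat) (mon : 'X_{1..5}) : int :=
  (mon (vx 0))%:Z - p%:Z * (mon (vx 1) + mon (vx 2))%:Z
  + q%:Z * (mon (vx 3) + mon (vx 4))%:Z.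

Definition wdegm (mon : 'X_{1..5}) : int :=
  - (mon (vx 1) + mon (vx 2))%:Z + (mon (vx 3) + mon (vx 4))%:Z.

Definition in_graded_piece (p q m : nat) (n d : int) (f : A) : Prop :=
  forall mon, mon \in msupp f ->
    wdegZ p q mon = n /\ (wdegm mon = d %[mod m%:Z])%Z.

Definition in_ideal (k : nat) (g : 'I_k -> A) (f : A) : Prop :=
  exists h : 'I_k -> A, f = \sum_(i < k) h i * g i.

Definition Jgen (p q m : nat) (s : CC) (i : 'I_4) : A :=
  let a := (m %/ gcdn m (q - p))%N in
  match val i with
  | 0 => 'X_(vx 0) ^+ (q - p)
  | 1 => 'X_(vx 2)
  | 2 => 'X_(vx 4)
  | _ => s%:MP - 'X_(vx 1) ^+ (a * q) * 'X_(vx 3) ^+ (a * p)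
  end.

(* dim_C (A/J)_(n,d) >= 1, where (A/J)_(n,d) = A_(n,d) / (J /\ A_(n,d)):
   i.e. this quotient vector space is nonzero, i.e. some element of the
   graded piece A_(n,d) is not in J. *)
Definition quot_piece_dim_ge1 (p q m : nat) (s : CC) (n d : int) : Prop :=
  exists f : A, in_graded_piece p q m n d f /\ ~ in_ideal (Jgen p q m s) f.

(* Main.v *)
Require Import Defs.
From HB Require Import structures.
From mathcomp Require Import all_boot all_algebra.
From mathcomp Require Import complex.
From mathcomp Require Import Rstruct.
From mathcomp Require Import mpoly.
From mathcomp Require Import all_order ring.
Import Order.TTheory GRing.Theory Num.Theory.
Local Open Scope ring_scope.

Definition PP := {poly {poly CC}}.
Definition ff : {rmorphism CC -> PP} := (@polyC {poly CC}) \o (@polyC CC).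
Definition hh (u v : {poly CC}) (i : 'I_5) : PP :=
  match val i with 0 => 'X | 1 => u%:P | 3 => v%:P | _ => 0 end.
Lemma vxv i : (i < 5)%N -> val (vx i) = i. Proof. move=> hi; exact: inordK. Qed.

Lemma phiX u v i : (i < 5)%N -> mmap ff (hh u v) ('X_(vx i)) = hh u v (vx i).
Proof. by move=> hi; rewrite mmapX mmap1U. Qed.

Lemma key p q m (s : CC) (u v : {poly CC}) e b c :
  (e < q - p)%N ->
  (forall t : {poly CC}, u^+b * v^+c != t * (s%:P - u^+(m %/ gcdn m (q-p) * q) * v^+(m %/ gcdn m (q-p) * p))) ->
  ~ in_ideal (Jgen p q m s) ('X_(vx 1)^+b * 'X_(vx 3)^+c * 'X_(vx 0)^+e).
Proof.
move=> he hw [h Hf].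
have := congr1 (mmap ff (hh u v)) Hf.
rewrite !big_ord_recl big_ord0 /=.
rewrite /Jgen /=.
rewrite !(rmorphD, rmorphM, rmorphB, rmorphN, rmorphXn, rmorph0) /= !mmapX !mmap1U mmapC /=.
have H0 : hh u v (vx 0) = 'X by rewrite /hh vxv.
have H1 : hh u v (vx 1) = u%:P by rewrite /hh vxv.
have H2 : hh u v (vx 2) = 0 by rewrite /hh vxv.
have H3 : hh u v (vx 3) = v%:P by rewrite /hh vxv.
have H4 : hh u v (vx 4) = 0 by rewrite /hh vxv.
have HX : forall (w : {poly CC}) n, (w%:P : PP)^+n = (w^+n)%:P by move=> w n; rewrite polyC_exp.
have HM : forall (w z : {poly CC}), (w%:P : PP) * z%:P = (w * z)%:P by move=> w z; rewrite polyCM.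
have HB : forall (w z : {poly CC}), (w%:P : PP) - z%:P = (w - z)%:P by move=> w z; rewrite polyCB.
rewrite H0 H1 H2 H3 H4 ?mulr0 ?addr0 ?add0r !HX !HM HB.
set t3 := mmap _ _ (h (lift _ (lift _ (lift _ _)))).
move/(congr1 (fun P : PP => P`_e)).
rewrite coefMXn ltnn subnn coefC /= coefD coefMXn he add0r coefMC => E.
by move: (hw t3`_e); rewrite E eqxx.
Qed.
Lemma int_nat (x : int) : 0 <= x -> exists k : nat, x = k%:Z.
Proof. by case: x => [k|k] //; exists k. Qed.

Lemma arith p q m (n d : int) : (0<p)%N -> (p<q)%N -> (0<m)%N ->
  exists e b c : nat, (e < q - p)%N /\ e%:Z - p%:Z * b%:Z + q%:Z * c%:Z = n
   /\ (c%:Z - b%:Z = d %[mod m%:Z])%Z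
   /\ ((b < (m %/ gcdn m (q-p)) * q)%N \/ (c < (m %/ gcdn m (q-p)) * p)%N).
Proof.
move=> p0 pq m0.
set k := gcdn m (q-p). set a := (m %/ k)%N. set g := (q - p)%N.
have g0 : (0 < g)%N by rewrite subn_gt0.
have k0 : (0 < k)%N by rewrite gcdn_gt0 m0.
have a0 : (0 < a)%N by rewrite divn_gt0 // dvdn_leq // dvdn_gcdl.
have ag : (a * g = m * (g %/ k))%N.
  by rewrite /a divn_mulAC ?dvdn_gcdl // muln_divA // dvdn_gcdr.
have gz : g%:Z = q%:Z - p%:Z by rewrite /g subzn // ltnW.
set N0 : int := n - p%:Z * d.
have gnz : g%:Z != 0 by rewrite lt0r_neq0 // ltz_nat.
set C0 := (N0 %/ g%:Z)%Z. set E := (N0 %% g%:Z)%Z.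
have hN : N0 = C0 * g%:Z + E := divz_eq _ _.
have E0 : 0 <= E := modz_ge0 _ gnz.
have E1 : E < g%:Z by apply: ltz_pmod; rewrite ltz_nat.
set B0 := C0 - d.
have APp : 0 < (a * p)%N%:Z by rewrite ltz_nat muln_gt0 a0.
have AQp : 0 < (a * q)%N%:Z by rewrite ltz_nat muln_gt0 a0 (leq_ltn_trans (leq0n p) pq).
set AP : int := (a * p)%N%:Z. set AQ : int := (a * q)%N%:Z.
have hC := divz_eq C0 AP. have hB := divz_eq B0 AQ.
have hC0 : 0 <= (C0 %% AP)%Z := modz_ge0 _ (lt0r_neq0 APp).
have hB0 : 0 <= (B0 %% AQ)%Z := modz_ge0 _ (lt0r_neq0 AQp).
have hC1 : (C0 %% AP)%Z < AP := ltz_pmod _ APp.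
have hB1 : (B0 %% AQ)%Z < AQ := ltz_pmod _ AQp.
set x := (C0 %/ AP)%Z. set y := (B0 %/ AQ)%Z.
pose j := if x <= y then x else y.
have hj1 : j <= x by rewrite /j; case: ifP => // /negbT; rewrite -ltNge => /ltW.
have hj2 : j <= y by rewrite /j; case: ifP.
have Hc : 0 <= C0 - AP * j.
  have -> : C0 - AP * j = AP * (x - j) + (C0 %% AP)%Z by rewrite {1}hC -/x; ring.
  apply: addr_ge0 => //; apply: mulr_ge0; [exact: ltW | by rewrite subr_ge0].
have Hb : 0 <= B0 - AQ * j.
  have -> : B0 - AQ * j = AQ * (y - j) + (B0 %% AQ)%Z by rewrite {1}hB -/y; ring.
  apply: addr_ge0 => //; apply: mulr_ge0; [exact: ltW | by rewrite subr_ge0].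
have [c' Ec] := int_nat _ Hc. have [b' Eb] := int_nat _ Hb. have [e' Ee] := int_nat _ E0.
exists e', b', c'; split; [|split; [|split]].
- by rewrite -ltz_nat -Ee.
- rewrite -Ee -Eb -Ec /B0 gz in hN *. rewrite /AP /AQ !PoszM.
  rewrite -[n](subrK (p%:Z * d)) -/N0 hN; ring.
- rewrite -Ec -Eb.
  have hag : (a%:Z * q%:Z - a%:Z * p%:Z) = m%:Z * (g %/ k)%N%:Z.
    by rewrite -mulrBr -gz -!PoszM ag.
  have -> : C0 - AP * j - (B0 - AQ * j) = ((g %/ k)%N%:Z * j) * m%:Z + d.
    rewrite /AP /AQ /B0 !PoszM.
    transitivity (d + (a%:Z * q%:Z - a%:Z * p%:Z) * j); first by ring.
    rewrite hag; ring.
  exact: modzMDl.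
- move: Ec Eb; rewrite /j; case: ifP => _ Ec Eb; [right | left].
  + rewrite -ltz_nat -Ec.
    have -> : C0 - AP * x = (C0 %% AP)%Z by rewrite {1}hC; ring.
    exact: hC1.
  + rewrite -ltz_nat -Eb.
    have -> : B0 - AQ * y = (B0 %% AQ)%Z by rewrite {1}hB; ring.
    exact: hB1.
Qed.

Lemma vxE i j : (i < 5)%N -> (j < 5)%N -> (vx i == vx j) = (i == j).
Proof. by move=> hi hj; rewrite -val_eqE /= !vxv. Qed.

Lemma graded p q m (n d : int) (e b c : nat) :
  e%:Z - p%:Z * b%:Z + q%:Z * c%:Z = n -> (c%:Z - b%:Z = d %[mod m%:Z])%Z ->
  in_graded_piece p q m n d ('X_(vx 1)^+b * 'X_(vx 3)^+c * 'X_(vx 0)^+e).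
Proof.
move=> hn hd mon.
rewrite !mpolyXn -!mpolyXD msuppX mem_seq1 => /eqP ->.
rewrite /wdegZ /wdegm !mnmDE !mulmnE !mnm1E !vxE //=.
rewrite !mul0n !mul1n !add0n !addn0; split => //.
by rewrite addrC.
Qed.

Theorem lemma4p7 (p q m : nat) :
  (0 < p)%N -> (p < q)%N -> coprime p q -> (0 < m)%N ->
  forall n d : int,
    quot_piece_dim_ge1 p q m 1 n d /\ quot_piece_dim_ge1 p q m 0 n d.
Proof.
move=> p0 pq _ m0 n d.
have [e [b [c [he [hn [hd hbc]]]]]] := arith p q m n d p0 pq m0.
have G := graded p q m n d e b c hn hd.
split; exists ('X_(vx 1)^+b * 'X_(vx 3)^+c * 'X_(vx 0)^+e); split => //.
- apply: (@key _ _ _ _ 1 1) => // t.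
  by rewrite !expr1n mulr1 polyC1 subrr mulr0 oner_neq0.
- case: hbc => [hb|hc].
  + apply: (@key _ _ _ _ 'X 1) => // t.
    rewrite !expr1n !mulr1 polyC0 sub0r mulrN.
    apply/eqP => /(congr1 (fun P : {poly CC} => P`_b)).
    rewrite coefN coefMXn hb coefXn eqxx oppr0 => /eqP; by rewrite oner_eq0.
  + apply: (@key _ _ _ _ 1 'X) => // t.
    rewrite !expr1n !mul1r polyC0 sub0r mulrN.
    apply/eqP => /(congr1 (fun P : {poly CC} => P`_c)).
    rewrite coefN coefMXn hc coefXn eqxx oppr0 => /eqP; by rewrite oner_eq0.
Qed.
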